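(* Let $\mathbb{F}$ be a field of characteristic not $2$, $\alpha\in\mathbb{F}\setminus\{0,1\}$, and suppose $\mathbb{F}$ contains a root $\zeta$ of $x^2-(4\alpha-2)x+1$. In $\mathfrak{J}(\alpha)$ let $\mu=-\frac{1+\zeta}{4}$, $\nu=-\frac{1+\zeta^{-1}}{4}$, $\mathfrak{s}=\frac{1}{4(\alpha-1)}(\mu\mathfrak{a}+\mathfrak{a}\mathfrak{b}+\nu\mathfrak{b})$, $\mathfrak{t}=\frac{1}{\alpha(\alpha-1)}(\nu\mathfrak{a}+\mathfrak{a}\mathfrak{b}+\mu\mathfrak{b})$, and $1_{\mathfrak{J}}=\frac{2}{\alpha-1}\sigma$. If $\mathfrak{d}=\xi\mathfrak{s}+\frac12 1_{\mathfrak{J}}+\xi^{-1}\mathfrak{t}$, for some $0\neq\xi\in\mathbb{F}$, is a primitive axis of Jordan type half of $\mathfrak{J}(\alpha)$, then $\mathfrak{s}^{\tau_{\mathfrak{d}}}=\xi^{-2}\mathfrak{t}$ and $\mathfrak{t}^{\tau_{\mathfrak{d}}}=\xi^{2}\mathfrak{s}$.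
   Context: $\mathfrak{J}(\alpha)$ is the commutative algebra with basis $\mathfrak{a},\mathfrak{b},\sigma$ and product $\mathfrak{a}^2=\mathfrak{a}$, $\mathfrak{b}^2=\mathfrak{b}$, $\mathfrak{a}\mathfrak{b}=\frac12\mathfrak{a}+\frac12\mathfrak{b}+\sigma$, $\mathfrak{a}\sigma=\frac{\alpha-1}{2}\mathfrak{a}$, $\mathfrak{b}\sigma=\frac{\alpha-1}{2}\mathfrak{b}$, $\sigma^2=\frac{\alpha-1}{2}\sigma$; $1_{\mathfrak{J}}$ is its identity. Its Frobenius form has Gram matrix, in the basis $\mathfrak{a},\mathfrak{b},\sigma$: $(\mathfrak{a},\mathfrak{a})=(\mathfrak{b},\mathfrak{b})=1$, $(\mathfrak{a},\mathfrak{b})=\alpha$, $(\mathfrak{a},\sigma)=(\mathfrak{b},\sigma)=\frac{\alpha-1}{2}$, $(\sigma,\sigma)=\frac{(\alpha-1)^2}{2}$. For $x$ in an algebra $J$, $J_\lambda(x)=\{u:xu=\lambda u\}$; a primitive axis of Jordan type half is $x\neq0$, $x^2=x$, $J=J_1(x)\oplus J_0(x)\oplus J_{1/2}(x)$, $J_1(x)=\mathbb{F}x$, with fusion rules $J_1J_1\subseteq J_1$, $J_1J_0=0$, $J_0J_0\subseteq J_0$, $J_1J_{1/2},J_0J_{1/2}\subseteq J_{1/2}$, $J_{1/2}J_{1/2}\subseteq J_1\oplus J_0$. The Miyamoto involution $\tau_x$ is the automorphism acting as identity on $J_1(x)\oplus J_0(x)$ and $-1$ on $J_{1/2}(x)$.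 *)

(* Defs.v *)
From HB Require Import structures.
From mathcomp Require Import all_boot all_order all_algebra.
Set Implicit Arguments. Unset Strict Implicit. Unset Printing Implicit Defensive.
Import Order.TTheory GRing.Theory Num.Theory.
Local Open Scope ring_scope.

Section JAlg.
Variables (F : fieldType) (alpha : F).

Definition Jv := 'rV[F]_3.
Definition ja : Jv := delta_mx 0 (0 : 'I_3).
Definition jb : Jv := delta_mx 0 (1 : 'I_3).
Definition jsig : Jv := delta_mx 0 (2 : 'I_3).

Definition jtab (i j : 'I_3) : Jv :=
  match nat_of_ord i, nat_of_ord j with
  | 0, 0 => ja
  | 1, 1 => jb
  | 0, 1 | 1, 0 => 2^-1 *: ja + 2^-1 *: jb + jsig
  | 0, _ | _, 0 => ((alpha - 1) / 2) *: ja
  | 1, _ | _, 1 => ((alpha - 1) / 2) *: jb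
  | _, _ => ((alpha - 1) / 2) *: jsig
  end.

Definition jmul (u v : Jv) : Jv :=
  \sum_(i < 3) \sum_(j < 3) (u 0 i * v 0 j) *: jtab i j.

Definition eigen (x : Jv) (l : F) (u : Jv) : Prop := jmul x u = l *: u.

Definition primitive_axis_half (x : Jv) : Prop :=
  [/\ x != 0 /\ jmul x x = x,
      (forall u, exists u1 u0 uh,
          [/\ eigen x 1 u1, eigen x 0 u0, eigen x 2^-1 uh & u = u1 + u0 + uh]),
      (forall u1 u0 uh, eigen x 1 u1 -> eigen x 0 u0 -> eigen x 2^-1 uh ->
          u1 + u0 + uh = 0 -> [/\ u1 = 0, u0 = 0 & uh = 0]),
      (forall u, eigen x 1 u -> exists c : F, u = c *: x) &
      [/\ (forall u v, eigen x 1 u -> eigen x 1 v -> eigen x 1 (jmul u v)) /\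
          (forall u v, eigen x 1 u -> eigen x 0 v -> jmul u v = 0),
          (forall u v, eigen x 0 u -> eigen x 0 v -> eigen x 0 (jmul u v)),
          (forall u v, eigen x 1 u -> eigen x 2^-1 v -> eigen x 2^-1 (jmul u v)),
          (forall u v, eigen x 0 u -> eigen x 2^-1 v -> eigen x 2^-1 (jmul u v)) &
          (forall u v, eigen x 2^-1 u -> eigen x 2^-1 v ->
             exists w1 w0, [/\ eigen x 1 w1, eigen x 0 w0 & jmul u v = w1 + w0])]].

(* Miyamoto involution: tau_x acts as identity on J_1(x) + J_0(x) and as -1
   on J_{1/2}(x).  [miyamoto x u v] means u^{tau_x} = v, i.e. v is obtained from
   a decomposition u = u1 + u0 + uh by flipping the sign of uh (unique when
   x is a primitive axis, since the sum is direct). *)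
Definition miyamoto (x u v : Jv) : Prop :=
  exists u1 u0 uh, [/\ eigen x 1 u1, eigen x 0 u0, eigen x 2^-1 uh,
                      u = u1 + u0 + uh & v = u1 + u0 - uh].
End JAlg.

(* Main.v *)
Require Import Defs.
From HB Require Import structures.
From mathcomp Require Import all_boot all_order all_algebra ring.
Import Order.TTheory GRing.Theory Num.Theory.
Local Open Scope ring_scope.

Lemma ord3 (P : 'I_3 -> Prop) : P 0 -> P 1 -> P 2 -> forall k, P k.
Proof.
move=> h0 h1 h2 [[|[|[|//]]] Hk].
- by rewrite (_ : Ordinal Hk = 0) //; apply: val_inj.
- by rewrite (_ : Ordinal Hk = 1) //; apply: val_inj.
- by rewrite (_ : Ordinal Hk = 2) //; apply: val_inj.
Qed.

Section S.
Variables (F : fieldType) (alpha : F).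
Let c := (alpha - 1) / 2.

Lemma jmulE (u v : Jv F) : jmul alpha u v = \row_k
  (if nat_of_ord k == 0%N then u 0 0 * v 0 0 + 2^-1 * (u 0 0 * v 0 1 + u 0 1 * v 0 0) + c * (u 0 0 * v 0 2 + u 0 2 * v 0 0)
   else if nat_of_ord k == 1%N then u 0 1 * v 0 1 + 2^-1 * (u 0 0 * v 0 1 + u 0 1 * v 0 0) + c * (u 0 1 * v 0 2 + u 0 2 * v 0 1)
   else (u 0 0 * v 0 1 + u 0 1 * v 0 0) + c * (u 0 2 * v 0 2)).
Proof.
apply/rowP => k; rewrite /jmul !big_ord_recr /= !big_ord0 !add0r.
have E0 : widen_ord (leqnSn 2) (widen_ord (leqnSn 1) ord_max) = 0 :> 'I_3 by apply: val_inj.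
have E1 : widen_ord (leqnSn 2) ord_max = 1 :> 'I_3 by apply: val_inj.
have E2 : ord_max = 2 :> 'I_3 by apply: val_inj.
rewrite !mxE /jtab /= /ja /jb /jsig.
case: k => [[|[|[|//]]] Hk] /=; rewrite ?mxE /= E0 E1 E2 /c; ring.
Qed.
Lemma jmulZr (u v : Jv F) p : jmul alpha u (p *: v) = p *: jmul alpha u v.
Proof.
apply/rowP => k; rewrite !jmulE !mxE; case: k => [[|[|[|//]]] Hk] /=; rewrite ?mxE; ring.
Qed.
Lemma jmulBr (u v w : Jv F) : jmul alpha u (v - w) = jmul alpha u v - jmul alpha u w.
Proof.
apply/rowP => k; rewrite !jmulE !mxE; case: k => [[|[|[|//]]] Hk] /=; rewrite ?mxE; ring.
Qed.
Lemma jmul_one (u : Jv F) : (2:F) != 0 -> alpha != 1 -> jmul alpha u ((2 / (alpha - 1)) *: jsig F) = u.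
Proof.
move=> h2 ha; have ha' : alpha - 1 != 0 by rewrite subr_eq0.
apply/rowP; apply: ord3; rewrite !jmulE !mxE /= ?mxE /=.
all: rewrite /c; field; by rewrite ha' h2.
Qed.
Definition vec (x y z : F) : Jv F := x *: ja F + y *: jb F + z *: jsig F.
Lemma vecE (u : Jv F) : u = vec (u 0 0) (u 0 1) (u 0 2).
Proof. apply/rowP; apply: ord3; rewrite !mxE /=; ring. Qed.
Lemma jmul_vec x y z x' y' z' : jmul alpha (vec x y z) (vec x' y' z') =
  vec (x * x' + 2^-1 * (x * y' + y * x') + c * (x * z' + z * x'))
      (y * y' + 2^-1 * (x * y' + y * x') + c * (y * z' + z * y'))
      ((x * y' + y * x') + c * (z * z')).
Proof. apply/rowP; apply: ord3; rewrite !jmulE !mxE /= ?mxE /=; ring. Qed.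
Lemma jmulC (u v : Jv F) : jmul alpha u v = jmul alpha v u.
Proof. apply/rowP; apply: ord3; rewrite !jmulE !mxE /=; ring. Qed.
Lemma jmul_lin3 (u v w z : Jv F) p q r :
  jmul alpha (p *: u + q *: v + r *: w) z = p *: jmul alpha u z + q *: jmul alpha v z + r *: jmul alpha w z.
Proof. apply/rowP; apply: ord3; rewrite !jmulE !mxE /= ?mxE /=; ring. Qed.
Lemma vecZ k x y z : k *: vec x y z = vec (k * x) (k * y) (k * z).
Proof. by rewrite /vec !scalerDr !scalerA. Qed.
End S.
Arguments vec {F}.
Arguments vecE {F}.

Theorem lemma3p9 (F : fieldType) (alpha zeta xi : F) :
  (2 \notin [pchar F])%N ->
  alpha != 0 -> alpha != 1 ->
  zeta ^+ 2 - (4 * alpha - 2) * zeta + 1 = 0 ->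
  xi != 0 ->
  let mu := - (1 + zeta) / 4 in
  let nu := - (1 + zeta^-1) / 4 in
  let a := ja F in let b := jb F in let sig := jsig F in
  let ab := jmul alpha a b in
  let s := (4 * (alpha - 1))^-1 *: (mu *: a + ab + nu *: b) in
  let t := (alpha * (alpha - 1))^-1 *: (nu *: a + ab + mu *: b) in
  let one := (2 / (alpha - 1)) *: sig in
  let d := xi *: s + 2^-1 *: one + xi^-1 *: t in
  primitive_axis_half alpha d ->
  miyamoto alpha d s (xi ^- 2 *: t) /\ miyamoto alpha d t (xi ^+ 2 *: s).
Proof.
move=> hc ha0 ha1 hz hxi mu nu a b sig ab s t one d [[_ Hdd] _ _ _ _].
have h2 : (2:F) != 0.
  apply: contra hc => /eqP e; by rewrite inE /= e.
have h4 : (4:F) != 0 by rewrite (_ : 4 = 2 * 2 :> F) ?mulf_neq0 //; ring.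
have h8 : (8:F) != 0 by rewrite (_ : 8 = 2 * 4 :> F) ?mulf_neq0 //; ring.
have hz0 : zeta != 0.
  apply/negP => /eqP z0; move: hz; rewrite z0; apply/eqP; rewrite expr2 !mul0r mulr0 !subr0 add0r oner_neq0.
  done.
have hal : alpha = (1 + zeta) ^+ 2 / (4 * zeta).
  have e : (1 + zeta) ^+ 2 = 4 * zeta * alpha by apply/eqP; rewrite -subr_eq0 -hz; apply/eqP; ring.
  by rewrite e; field; rewrite h4 hz0.
have hz1 : 1 + zeta != 0.
  by apply: contra ha0 => /eqP e; rewrite hal e expr2 !mul0r.
have hzm : zeta - 1 != 0.
  apply: contra ha1 => /eqP e; rewrite hal (_ : zeta = 1); last by apply/eqP; rewrite -subr_eq0 e.
  by apply/eqP; field; rewrite h4 ?oner_neq0.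
have hq : (1 + zeta) ^+ 2 + -1 * (4 * zeta) != 0.
  by rewrite (_ : _ + _ = (zeta - 1) ^+ 2) ?expf_neq0 //; ring.
have ham : alpha - 1 != 0 by rewrite subr_eq0.
have Hone : jmul alpha d one = d by rewrite /one /sig jmul_one.
have Hone' : forall u, jmul alpha u one = u by move=> u; rewrite /one /sig jmul_one.
set K := (4 * (alpha - 1))^-1.
set L := (alpha * (alpha - 1))^-1.
have abE : ab = vec 2^-1 2^-1 1.
  by rewrite /ab /a /b (vecE (ja F)) (vecE (jb F)) jmul_vec !mxE /=; congr vec; ring.
have sE : s = vec (K * ((1 - zeta) / 4)) (K * ((zeta - 1) / (4 * zeta))) K.
  rewrite /s abE /mu /nu /a /b (vecE (ja F)) (vecE (jb F)) /vec !mxE /=.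
  apply/rowP; apply: ord3; rewrite !mxE /=; rewrite /K; field; by rewrite ?ham ?h4 ?hz0 ?h2.
have tE : t = vec (L * ((zeta - 1) / (4 * zeta))) (L * ((1 - zeta) / 4)) L.
  rewrite /t abE /mu /nu /a /b (vecE (ja F)) (vecE (jb F)) /vec !mxE /=.
  apply/rowP; apply: ord3; rewrite !mxE /=; rewrite /L; field; by rewrite ?ham ?h4 ?hz0 ?h2 ?ha0.
have oneE : one = vec 0 0 (2 / (alpha - 1)).
  by rewrite /one /vec !scale0r !add0r.
have Hss : jmul alpha s s = 0.
  rewrite sE jmul_vec; transitivity (vec 0 0 0 : Jv F); last by rewrite /vec !scale0r !addr0.
  rewrite /K; congr vec; rewrite hal; field; by rewrite ?ham ?h4 ?hz0 ?h2 ?hz1 ?hzm ?hq.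
have Htt : jmul alpha t t = 0.
  rewrite tE jmul_vec; transitivity (vec 0 0 0 : Jv F); last by rewrite /vec !scale0r !addr0.
  rewrite /L; congr vec; rewrite hal; field; by rewrite ?ham ?h4 ?hz0 ?h2 ?hz1 ?hzm ?hq.
have Hst : jmul alpha s t = 8^-1 *: one.
  rewrite sE tE oneE jmul_vec vecZ /K /L.
  congr vec; rewrite hal; field; by rewrite ?ham ?h4 ?hz0 ?h2 ?hz1 ?hzm ?hq ?h8.
have Hds : jmul alpha d s = 2^-1 *: s + (8^-1 * xi^-1) *: one.
  rewrite /d jmul_lin3 Hss [jmul alpha one s]jmulC Hone' [jmul alpha t s]jmulC Hst.
  apply/rowP => k; rewrite !mxE; field; by rewrite ?hxi ?h2 ?h8 ?h4 ?ham ?ha0.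
have Hdt : jmul alpha d t = 2^-1 *: t + (8^-1 * xi) *: one.
  rewrite /d jmul_lin3 Htt [jmul alpha one t]jmulC Hone' Hst.
  apply/rowP => k; rewrite !mxE; field; by rewrite ?hxi ?h2 ?h8 ?h4 ?ham ?ha0.
have Hs : jmul alpha d (s - xi^-2 *: t) = 2^-1 *: (s - xi^-2 *: t).
  rewrite jmulBr [jmul alpha d (_ *: t)]jmulZr Hds Hdt.
  apply/rowP => k; rewrite !mxE; field; by rewrite ?hxi ?h2 ?h8 ?h4 ?ham ?ha0.
have Ht : jmul alpha d (t - xi^+2 *: s) = 2^-1 *: (t - xi^+2 *: s).
  rewrite jmulBr [jmul alpha d (_ *: s)]jmulZr Hds Hdt.
  apply/rowP => k; rewrite !mxE; field; by rewrite ?hxi ?h2 ?h8 ?h4 ?ham ?ha0.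
split.
- exists ((4^-1 * xi^-1) *: d), (-(4^-1 * xi^-1) *: (one - d)), (2^-1 *: (s - xi^-2 *: t)); split.
  + by rewrite /eigen [jmul alpha d _]jmulZr Hdd scale1r.
  + by rewrite /eigen [jmul alpha d _]jmulZr jmulBr Hone Hdd subrr scaler0 scale0r.
  + by rewrite /eigen [jmul alpha d _]jmulZr Hs.
  + rewrite /d; apply/rowP => k; rewrite !mxE; field; by rewrite ?hxi ?h2 ?h8 ?h4 ?ham ?ha0.
  + rewrite /d; apply/rowP => k; rewrite !mxE; field; by rewrite ?hxi ?h2 ?h8 ?h4 ?ham ?ha0.
- exists ((4^-1 * xi) *: d), (-(4^-1 * xi) *: (one - d)), (2^-1 *: (t - xi^+2 *: s)); split.
  + by rewrite /eigen [jmul alpha d _]jmulZr Hdd scale1r.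
  + by rewrite /eigen [jmul alpha d _]jmulZr jmulBr Hone Hdd subrr scaler0 scale0r.
  + by rewrite /eigen [jmul alpha d _]jmulZr Ht.
  + rewrite /d; apply/rowP => k; rewrite !mxE; field; by rewrite ?hxi ?h2 ?h8 ?h4 ?ham ?ha0.
  + rewrite /d; apply/rowP => k; rewrite !mxE; field; by rewrite ?hxi ?h2 ?h8 ?h4 ?ham ?ha0.
Qed.
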